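(* Let $X=\bigsqcup_{\lambda\in\Lambda}G_\lambda$ be an MCQ, $R$ a ring, $M$ a left $R$-module, and let $(f_1,f_2,f_3,f_4;\phi_1,\phi_2)$ be a 6-tuple of maps ($f_1,f_2:X\times X\to R$, $f_3,f_4:\bigsqcup_\lambda(G_\lambda\times G_\lambda)\to R$, $\phi_1:X\times X\to M$, $\phi_2:\bigsqcup_\lambda(G_\lambda\times G_\lambda)\to M$) satisfying conditions (0-i)–(4-$\phi$). Define $g_1,g_2:X\times X\to R$, $g_3,g_4:\bigsqcup_\lambda(G_\lambda\times G_\lambda)\to R$, $\psi_1:X\times X\to M$, $\psi_2:\bigsqcup_\lambda(G_\lambda\times G_\lambda)\to M$ by $g_1(x,y)=f_1(e_x,y)$, $g_2(x,y)=f_3(x\triangleleft y,\,x^{-1}\triangleleft y)\,f_2(x,y)\,f_3(e_y,y)$, $g_3(a,b)=1$, $g_4(a,b)=f_1(e_a,a^{-1})$, $\psi_1(x,y)=f_3(x\triangleleft y,\,x^{-1}\triangleleft y)\,\phi_1(x,y)$, $\psi_2(a,b)=f_3(ab,\,b^{-1}a^{-1})\,\phi_2(a,b)$. Then the 6-tuple $(g_1,g_2,g_3,g_4;\psi_1,\psi_2)$ also satisfies conditions (0-i)–(4-$\phi$).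
   Context: A multiple conjugation quandle (MCQ) is a set $X=\bigsqcup_{\lambda\in\Lambda}G_\lambda$ that is a disjoint union of groups $G_\lambda$, together with a binary operation $\triangleleft:X\times X\to X$ such that: (i) for all $a,b\in G_\lambda$, $a\triangleleft b=b^{-1}ab$; (ii) for all $x\in X$ and $a,b\in G_\lambda$, $x\triangleleft e_\lambda=x$ and $x\triangleleft(ab)=(x\triangleleft a)\triangleleft b$, where $e_\lambda$ is the identity of $G_\lambda$; (iii) for all $x,y,z\in X$, $(x\triangleleft y)\triangleleft z=(x\triangleleft z)\triangleleft(y\triangleleft z)$; (iv) for all $x\in X$ and $a,b\in G_\lambda$, the elements $a\triangleleft x$ and $b\triangleleft x$ lie in a common group $G_\mu$ and $(ab)\triangleleft x=(a\triangleleft x)(b\triangleleft x)$. For $x\in X$, $G_x$ denotes the group containing $x$, $e_x$ its identity, $x^{-1}$ the inverse of $x$ in $G_x$. $\bigsqcup_{\lambda}(G_\lambda\times G_\lambda)$ is the set of pairs of elements lying in a common group $G_\lambda$. Rings have a multiplicative identity $1\neq0$ and need not be commutative. Conditions (0-i)–(4-$\phi$) on a 6-tuple $(f_1,f_2,f_3,f_4;\phi_1,\phi_2)$: For all $\lambda$ and $a,b,c\in G_\lambda$: (0-i) $f_3(a,b)$, $f_4(a,b)$ invertible; (0-ii) $f_3(ab,c)f_3(a,b)=f_3(a,bc)$; (0-iii) $f_3(ab,c)f_4(a,b)=f_4(a,bc)f_3(b,c)$; (0-iv) $f_4(ab,c)=f_4(a,bc)f_4(b,c)$; (0-$\phi$)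 $f_3(ab,c)\phi_2(a,b)+\phi_2(ab,c)=f_4(a,bc)\phi_2(b,c)+\phi_2(a,bc)$. For all $a,b\in G_\lambda$: (1-i) $f_1(a,b)=f_4(b^{-1},ab)f_3(a,b)$; (1-ii) $f_3(b,b^{-1}ab)+f_4(b,b^{-1}ab)f_2(a,b)=f_4(a,b)$; (1-$\phi$) $f_4(b,b^{-1}ab)\phi_1(a,b)+\phi_2(b,b^{-1}ab)=\phi_2(a,b)$. For all $x\in X$, $a,b\in G_\lambda$: (2-i) $f_1(x,e_\lambda)=1$; (2-ii) $f_1(x,ab)=f_1(x\triangleleft a,b)f_1(x,a)$; (2-iii) $f_2(x,ab)f_3(a,b)=f_1(x\triangleleft a,b)f_2(x,a)$; (2-iv) $f_2(x,ab)f_4(a,b)=f_2(x\triangleleft a,b)$; (2-$\phi$i) $f_2(x,e_\lambda)\phi_2(e_\lambda,e_\lambda)=\phi_1(x,e_\lambda)$; (2-$\phi$ii) $f_2(x,ab)\phi_2(a,b)+\phi_1(x,ab)=f_1(x\triangleleft a,b)\phi_1(x,a)+\phi_1(x\triangleleft a,b)$. For all $x,y,z\in X$: (3-i) $f_1(x\triangleleft y,z)f_1(x,y)=f_1(x\triangleleft z,y\triangleleft z)f_1(x,z)$; (3-ii) $f_1(x\triangleleft y,z)f_2(x,y)=f_2(x\triangleleft z,y\triangleleft z)f_1(y,z)$; (3-iii) $f_2(x\triangleleft y,z)=f_1(x\triangleleft z,y\triangleleft z)f_2(x,z)+f_2(x\triangleleft z,y\triangleleft z)f_2(y,z)$; (3-$\phi$)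 $f_1(x\triangleleft y,z)\phi_1(x,y)+\phi_1(x\triangleleft y,z)=f_1(x\triangleleft z,y\triangleleft z)\phi_1(x,z)+f_2(x\triangleleft z,y\triangleleft z)\phi_1(y,z)+\phi_1(x\triangleleft z,y\triangleleft z)$. For all $a,b\in G_\lambda$, $x\in X$: (4-i) $f_1(ab,x)f_3(a,b)=f_3(a\triangleleft x,b\triangleleft x)f_1(a,x)$; (4-ii) $f_1(ab,x)f_4(a,b)=f_4(a\triangleleft x,b\triangleleft x)f_1(b,x)$; (4-iii) $f_2(ab,x)=f_3(a\triangleleft x,b\triangleleft x)f_2(a,x)+f_4(a\triangleleft x,b\triangleleft x)f_2(b,x)$; (4-$\phi$) $f_1(ab,x)\phi_2(a,b)+\phi_1(ab,x)=f_3(a\triangleleft x,b\triangleleft x)\phi_1(a,x)+f_4(a\triangleleft x,b\triangleleft x)\phi_1(b,x)+\phi_2(a\triangleleft x,b\triangleleft x)$. *)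

(* Defs.v *)
From HB Require Import structures.
From mathcomp Require Import all_boot all_algebra.
Set Implicit Arguments. Unset Strict Implicit. Unset Printing Implicit Defensive.
Import GRing.Theory.
Local Open Scope ring_scope.

(* A multiple conjugation quandle X = disjoint union of groups G_l (l : idx).
   The carrier is one type; [grp x] is the index l with x in G_l.
   [gmul] is the group multiplication (only meaningful for elements of the
   same group), [ginv] the inverse in the group of the element, [gone l] the
   identity e_l of G_l, and [qop] the quandle operation (x <| y). *)
Record MCQ := {
  carrier :> Type;
  idx : Type;
  grp : carrier -> idx;
  gmul : carrier -> carrier -> carrier;
  ginv : carrier -> carrier;
  gone : idx -> carrier;
  qop : carrier -> carrier -> carrier;
  grp_gone : forall l, grp (gone l) = l;
  grp_gmul : forall a b, grp a = grp b -> grp (gmul a b) = grp a;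
  grp_ginv : forall a, grp (ginv a) = grp a;
  gmulA : forall a b c, grp a = grp b -> grp b = grp c ->
            gmul (gmul a b) c = gmul a (gmul b c);
  gmul1 : forall a, gmul a (gone (grp a)) = a;
  gmul1l : forall a, gmul (gone (grp a)) a = a;
  gmulV : forall a, gmul a (ginv a) = gone (grp a);
  gmulVl : forall a, gmul (ginv a) a = gone (grp a);
  qop_conj : forall a b, grp a = grp b -> qop a b = gmul (ginv b) (gmul a b);
  qop_e : forall x l, qop x (gone l) = x;
  qop_mul : forall x a b, grp a = grp b -> qop x (gmul a b) = qop (qop x a) b;
  qop_dist : forall x y z, qop (qop x y) z = qop (qop x z) (qop y z);
  qop_grp : forall x a b, grp a = grp b -> grp (qop a x) = grp (qop b x);
  qop_hom : forall x a b, grp a = grp b ->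
            qop (gmul a b) x = gmul (qop a x) (qop b x)
}.

Definition ring_invertible (R : nzRingType) (r : R) : Prop :=
  exists s : R, r * s = 1 /\ s * r = 1.

(* Maps on ⊔_l (G_l × G_l) are represented by total maps X -> X -> _,
   of which only the values on pairs in a common group are ever used. *)
Definition mcq_conditions (X : MCQ) (R : nzRingType) (M : lmodType R)
  (f1 f2 f3 f4 : X -> X -> R) (phi1 phi2 : X -> X -> M) : Prop :=
  let op := @qop X in let mul := @gmul X in let inv := @ginv X in
  let e := @gone X in let g := @grp X in
  (* (0-i) .. (0-phi) *)
  (forall a b c, g a = g b -> g b = g c ->
     [/\ ring_invertible (f3 a b) /\ ring_invertible (f4 a b),
         f3 (mul a b) c * f3 a b = f3 a (mul b c),
         f3 (mul a b) c * f4 a b = f4 a (mul b c) * f3 b c,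
         f4 (mul a b) c = f4 a (mul b c) * f4 b c &
         f3 (mul a b) c *: phi2 a b + phi2 (mul a b) c
           = f4 a (mul b c) *: phi2 b c + phi2 a (mul b c)]) /\
  (* (1-i), (1-ii), (1-phi) *)
  (forall a b, g a = g b ->
     [/\ f1 a b = f4 (inv b) (mul a b) * f3 a b,
         f3 b (mul (inv b) (mul a b)) + f4 b (mul (inv b) (mul a b)) * f2 a b
           = f4 a b &
         f4 b (mul (inv b) (mul a b)) *: phi1 a b
           + phi2 b (mul (inv b) (mul a b)) = phi2 a b]) /\
  (* (2-i), (2-phi i) *)
  (forall x l, f1 x (e l) = 1 /\ f2 x (e l) *: phi2 (e l) (e l) = phi1 x (e l)) /\
  (* (2-ii), (2-iii), (2-iv), (2-phi ii) *)
  (forall x a b, g a = g b ->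
     [/\ f1 x (mul a b) = f1 (op x a) b * f1 x a,
         f2 x (mul a b) * f3 a b = f1 (op x a) b * f2 x a,
         f2 x (mul a b) * f4 a b = f2 (op x a) b &
         f2 x (mul a b) *: phi2 a b + phi1 x (mul a b)
           = f1 (op x a) b *: phi1 x a + phi1 (op x a) b]) /\
  (* (3-i), (3-ii), (3-iii), (3-phi) *)
  (forall x y z,
     [/\ f1 (op x y) z * f1 x y = f1 (op x z) (op y z) * f1 x z,
         f1 (op x y) z * f2 x y = f2 (op x z) (op y z) * f1 y z,
         f2 (op x y) z = f1 (op x z) (op y z) * f2 x z
                          + f2 (op x z) (op y z) * f2 y z &
         f1 (op x y) z *: phi1 x y + phi1 (op x y) z
           = f1 (op x z) (op y z) *: phi1 x z + f2 (op x z) (op y z) *: phi1 y z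
             + phi1 (op x z) (op y z)]) /\
  (* (4-i), (4-ii), (4-iii), (4-phi) *)
  (forall a b x, g a = g b ->
     [/\ f1 (mul a b) x * f3 a b = f3 (op a x) (op b x) * f1 a x,
         f1 (mul a b) x * f4 a b = f4 (op a x) (op b x) * f1 b x,
         f2 (mul a b) x = f3 (op a x) (op b x) * f2 a x
                          + f4 (op a x) (op b x) * f2 b x &
         f1 (mul a b) x *: phi2 a b + phi1 (mul a b) x
           = f3 (op a x) (op b x) *: phi1 a x + f4 (op a x) (op b x) *: phi1 b x
             + phi2 (op a x) (op b x)]).

(* Main.v *)
Require Import Defs.
From mathcomp Require Import all_boot all_algebra.
Import GRing.Theory.
Local Open Scope ring_scope.
Set Implicit Arguments. Unset Strict Implicit.

Section Grp.
Variable X : MCQ.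
Implicit Types a b c u v x y z : X.

Lemma inv_uniq u v : grp u = grp v -> gmul u v = gone (grp u) -> v = ginv u.
Proof.
move=> huv h.
rewrite -[v]gmul1l -huv -(gmulVl u) gmulA ?grp_ginv // h.
by rewrite -(grp_ginv u) gmul1.
Qed.

Lemma inv_inv a : ginv (ginv a) = a.
Proof. by apply/esym/inv_uniq; rewrite ?grp_ginv // gmulVl. Qed.

Lemma gmul_ee l : gmul (@gone X l) (gone l) = gone l.
Proof. by have := gmul1 (gone l); rewrite grp_gone. Qed.

Lemma inv_e l : ginv (@gone X l) = gone l.
Proof. by apply/esym/inv_uniq; rewrite // gmul_ee grp_gone. Qed.

Lemma invM a b : grp a = grp b -> ginv (gmul a b) = gmul (ginv b) (ginv a).
Proof.
move=> hab; apply/esym/inv_uniq.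
  by rewrite grp_gmul // grp_gmul ?grp_ginv.
rewrite gmulA ?grp_gmul ?grp_ginv //.
rewrite -(@gmulA _ b) ?grp_ginv // gmulV -hab.
by rewrite -(grp_ginv a) gmul1l grp_ginv gmulV.
Qed.

Lemma mulKV a b : grp a = grp b -> gmul b (ginv (gmul a b)) = ginv a.
Proof.
move=> hab; rewrite invM // -gmulA ?grp_ginv // gmulV -hab.
by rewrite -(grp_ginv a) gmul1l.
Qed.

Lemma mulKl b x : grp b = grp x -> gmul b (gmul (ginv b) x) = x.
Proof.
move=> h; rewrite -gmulA ?grp_ginv // gmulV h gmul1l //.
Qed.

Lemma qope1 l x : qop (@gone X l) x = gone (grp (qop (gone l) x)).
Proof.
set u := qop (gone l) x.
have uu : gmul u u = u by rewrite /u -qop_hom // gmul_ee.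
rewrite -(gmulV u) -{2}uu gmulA ?grp_ginv // gmulV gmul1 //.
Qed.

Lemma qopE x a : qop (gone (grp x)) a = gone (grp (qop x a)).
Proof. by rewrite qope1; congr gone; apply: qop_grp; rewrite grp_gone. Qed.

Lemma qop_inv a x : qop (ginv a) x = ginv (qop a x).
Proof.
apply: inv_uniq; first by apply: qop_grp; rewrite grp_ginv.
rewrite -qop_hom ?grp_ginv // gmulV qope1; congr gone.
by apply: qop_grp; rewrite grp_gone.
Qed.

Lemma qop_einv a : qop (gone (grp a)) (ginv a) = gone (grp a).
Proof.
rewrite qop_conj ?grp_gone ?grp_ginv // inv_inv.
by rewrite -(grp_ginv a) gmul1l grp_ginv gmulV.
Qed.
End Grp.
Lemma qop_e_same (X : MCQ) (c : X) l : grp c = l -> qop (gone l) c = gone l.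
Proof.
move=> <-; rewrite qop_conj ?grp_gone //.
by rewrite gmul1l gmulVl.
Qed.
Lemma mulVK (X : MCQ) (a b : X) : grp a = grp b -> gmul (ginv a) (gmul a b) = b.
Proof. by move=> h; rewrite -gmulA ?grp_ginv // gmulVl h gmul1l. Qed.

Section Rng.
Variable R : nzRingType.
Implicit Types r s t x y : R.
Lemma inv_r r s : ring_invertible r -> s * r = 1 -> r * s = 1.
Proof.
move=> [t [rt tr]] sr.
have st : s = t by rewrite -[s]mulr1 -rt mulrA sr mul1r.
by rewrite st.
Qed.
Lemma cancel_r r x y : ring_invertible r -> x * r = y * r -> x = y.
Proof.
move=> [t [rt tr]] h.
by rewrite -[x]mulr1 -rt mulrA h -mulrA rt mulr1.
Qed.
Lemma inv_mul r s : ring_invertible r -> ring_invertible s -> ring_invertible (r * s).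
Proof.
move=> [t [rt tr]] [u [su us]]; exists (u * t); split.
  by rewrite mulrA -(mulrA r) su mulr1 rt.
by rewrite mulrA -(mulrA u) tr mulr1 us.
Qed.
End Rng.

Section F.
Variables (X : MCQ) (R : nzRingType) (M : lmodType R)
  (f1 f2 f3 f4 : X -> X -> R) (phi1 phi2 : X -> X -> M).
Hypothesis H : mcq_conditions f1 f2 f3 f4 phi1 phi2.

Local Notation E x := (@gone X (@grp X x)).
Local Notation k u := (f3 u (@ginv X u)).
Local Notation h u := (f1 (E u) (@ginv X u)).

Lemma C0 a b c : grp a = grp b -> grp b = grp c ->
     [/\ ring_invertible (f3 a b) /\ ring_invertible (f4 a b),
         f3 (gmul a b) c * f3 a b = f3 a (gmul b c),
         f3 (gmul a b) c * f4 a b = f4 a (gmul b c) * f3 b c,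
         f4 (gmul a b) c = f4 a (gmul b c) * f4 b c &
         f3 (gmul a b) c *: phi2 a b + phi2 (gmul a b) c
           = f4 a (gmul b c) *: phi2 b c + phi2 a (gmul b c)].
Proof. by case: H => [+ _]; apply. Qed.

Lemma C1 a b : grp a = grp b ->
     [/\ f1 a b = f4 (ginv b) (gmul a b) * f3 a b,
         f3 b (gmul (ginv b) (gmul a b)) + f4 b (gmul (ginv b) (gmul a b)) * f2 a b
           = f4 a b &
         f4 b (gmul (ginv b) (gmul a b)) *: phi1 a b
           + phi2 b (gmul (ginv b) (gmul a b)) = phi2 a b].
Proof. by case: H => [_ [+ _]]; apply. Qed.

Lemma C2 x l : f1 x (gone l) = 1 /\ f2 x (gone l) *: phi2 (gone l) (gone l) = phi1 x (gone l).
Proof. by case: H => [_ [_ [+ _]]]; apply. Qed.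

Lemma C3 x a b : grp a = grp b ->
     [/\ f1 x (gmul a b) = f1 (qop x a) b * f1 x a,
         f2 x (gmul a b) * f3 a b = f1 (qop x a) b * f2 x a,
         f2 x (gmul a b) * f4 a b = f2 (qop x a) b &
         f2 x (gmul a b) *: phi2 a b + phi1 x (gmul a b)
           = f1 (qop x a) b *: phi1 x a + phi1 (qop x a) b].
Proof. by case: H => [_ [_ [_ [+ _]]]]; apply. Qed.

Lemma C4 x y z :
     [/\ f1 (qop x y) z * f1 x y = f1 (qop x z) (qop y z) * f1 x z,
         f1 (qop x y) z * f2 x y = f2 (qop x z) (qop y z) * f1 y z,
         f2 (qop x y) z = f1 (qop x z) (qop y z) * f2 x z
                          + f2 (qop x z) (qop y z) * f2 y z &
         f1 (qop x y) z *: phi1 x y + phi1 (qop x y) z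
           = f1 (qop x z) (qop y z) *: phi1 x z + f2 (qop x z) (qop y z) *: phi1 y z
             + phi1 (qop x z) (qop y z)].
Proof. by case: H => [_ [_ [_ [_ [+ _]]]]]; apply. Qed.

Lemma C5 a b x : grp a = grp b ->
     [/\ f1 (gmul a b) x * f3 a b = f3 (qop a x) (qop b x) * f1 a x,
         f1 (gmul a b) x * f4 a b = f4 (qop a x) (qop b x) * f1 b x,
         f2 (gmul a b) x = f3 (qop a x) (qop b x) * f2 a x
                          + f4 (qop a x) (qop b x) * f2 b x &
         f1 (gmul a b) x *: phi2 a b + phi1 (gmul a b) x
           = f3 (qop a x) (qop b x) *: phi1 a x + f4 (qop a x) (qop b x) *: phi1 b x
             + phi2 (qop a x) (qop b x)].
Proof. by case: H => [_ [_ [_ [_ [_ +]]]]]; apply. Qed.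

Lemma f3inv a b : grp a = grp b -> ring_invertible (f3 a b).
Proof. by move=> hab; case: (C0 hab (erefl (grp b))) => [[]]. Qed.
Lemma f4inv a b : grp a = grp b -> ring_invertible (f4 a b).
Proof. by move=> hab; case: (C0 hab (erefl (grp b))) => [[]]. Qed.

Lemma f3ee l : f3 (@gone X l) (gone l) = 1.
Proof.
case: (C0 (erefl (grp (gone l))) (erefl _)) => _ e _ _ _.
rewrite gmul_ee in e.
apply: (cancel_r (f3inv (erefl (grp (gone l))))).
by rewrite e mul1r.
Qed.

Lemma k_e u : k u * f3 (E u) u = 1.
Proof.
have g1 : grp (E u) = grp u by rewrite grp_gone.
have g2 : grp u = grp (ginv u) by rewrite grp_ginv.
case: (C0 g1 g2) => _ e _ _ _.
by rewrite gmul1l gmulV f3ee in e.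
Qed.

Lemma e_k u : f3 (E u) u * k u = 1.
Proof. by apply: inv_r (k_e u); apply: f3inv; rewrite grp_gone. Qed.

Lemma kf3 u v : grp u = grp v -> k (gmul u v) * f3 u v = k u.
Proof.
move=> huv.
have g2 : grp v = grp (ginv (gmul u v)) by rewrite grp_ginv grp_gmul.
case: (C0 huv g2) => _ e _ _ _.
by rewrite e mulKV.
Qed.

Lemma hdef u : h u = f4 u (ginv u) * f3 (E u) (ginv u).
Proof.
have g : grp (E u) = grp (ginv u) by rewrite grp_gone grp_ginv.
case: (C1 g) => -> _ _.
by rewrite inv_inv -(grp_ginv u) gmul1l.
Qed.

Lemma hinv u : ring_invertible (h u).
Proof.
rewrite hdef; apply: inv_mul; [apply: f4inv|apply: f3inv];
  by rewrite ?grp_ginv ?grp_gone.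
Qed.

Lemma kf4 u v : grp u = grp v -> k (gmul u v) * f4 u v = h u * k v.
Proof.
move=> huv.
have g2 : grp v = grp (ginv (gmul u v)) by rewrite grp_ginv grp_gmul.
case: (C0 huv g2) => _ _ e _ _.
rewrite e mulKV // invM //.
have g3 : grp v = grp (ginv v) by rewrite grp_ginv.
have g4 : grp (ginv v) = grp (ginv u) by rewrite !grp_ginv.
case: (C0 g3 g4) => _ e' _ _ _.
by rewrite -e' gmulV hdef -huv mulrA.
Qed.

Lemma hM a b : grp a = grp b -> h (gmul a b) = h a * h b.
Proof.
move=> hab.
have g : grp (ginv b) = grp (ginv a) by rewrite !grp_ginv.
case: (C3 (E a) g) => e _ _ _.
rewrite grp_gmul // invM // e -hab.
by rewrite (@qop_e_same _ (ginv b)) ?grp_ginv ?grp_gone.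
Qed.

Lemma L3 a b : grp a = grp b -> f3 (E a) (gmul a b) * h a = f4 a b * f3 (E a) b.
Proof.
move=> hab.
have gab : grp (ginv a) = grp (gmul a b) by rewrite grp_ginv grp_gmul.
have g1 : grp a = grp (ginv a) by rewrite grp_ginv.
case: (C0 g1 gab) => _ _ e _ _.
have g0 : grp (E a) = grp (ginv a) by rewrite grp_gone grp_ginv.
case: (C0 g0 gab) => _ e' _ _ _.
rewrite gmulV in e; rewrite -(grp_ginv a) gmul1l grp_ginv in e'.
rewrite hdef mulrA e -mulrA e' mulVK //.
Qed.

Lemma L1 y z : k (qop y z) * f1 y z = f1 (E y) z * k y.
Proof.
have g : grp y = grp (ginv y) by rewrite grp_ginv.
case: (C5 z g) => e _ _ _.
by rewrite gmulV qop_inv in e; rewrite e.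
Qed.

Lemma L4 y z : f1 y z * f3 (E y) y = f3 (E (qop y z)) (qop y z) * f1 (E y) z.
Proof.
have g : grp (E y) = grp y by rewrite grp_gone.
case: (C5 z g) => e _ _ _.
by rewrite gmul1l qopE in e.
Qed.
Lemma sc1 (v : M) : 1 *: v = v. Proof. exact: scale1r. Qed.

Lemma main : mcq_conditions
    (fun x y => f1 (@gone X (@grp X x)) y)
    (fun x y => f3 (@qop X x y) (@qop X (@ginv X x) y) * f2 x y
                * f3 (@gone X (@grp X y)) y)
    (fun a b => 1)
    (fun a b => f1 (@gone X (@grp X a)) (@ginv X a))
    (fun x y => f3 (@qop X x y) (@qop X (@ginv X x) y) *: phi1 x y)
    (fun a b => f3 (@gmul X a b) (@gmul X (@ginv X b) (@ginv X a)) *: phi2 a b).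
Proof.
rewrite /mcq_conditions; cbv zeta beta.
split; [|split; [|split; [|split; [|split]]]].
- move=> a b c gab gbc; split.
  + split; first by rewrite /ring_invertible; exists 1; rewrite mulr1.
    exact: hinv.
  + by rewrite mulr1.
  + by rewrite mul1r mulr1.
  + by rewrite hM.
  + have gbc' : grp b = grp (gmul b c) by rewrite grp_gmul.
    have gab' : grp (gmul a b) = grp c by rewrite grp_gmul // gab.
    have gabc : grp a = grp (gmul b c) by rewrite grp_gmul.
    rewrite -!invM // sc1.
    case: (C0 gab gbc) => _ _ _ _ e.
    have := congr1 (fun m => k (gmul (gmul a b) c) *: m) e.
    rewrite !scalerDr !scalerA kf3 // gmulA // kf4 // -!scalerA.
- move=> a b gab.
  have gq : qop a b = gmul (ginv b) (gmul a b) := qop_conj gab.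
  case: (C1 gab) => _ e2 e3.
  set c := gmul (ginv b) (gmul a b) in gq e2 e3 *.
  have gbc : grp b = grp c by rewrite /c grp_gmul ?grp_ginv // grp_gmul.
  have mbc : gmul b c = gmul a b by rewrite /c mulKl // grp_gmul.
  rewrite qop_inv gq.
  split.
  + by rewrite mulr1 inv_inv grp_ginv gab.
  + rewrite !mulrA -(kf4 gbc) mbc -(mulrA _ (f4 b c)).
    have e2' : f4 b c * f2 a b = f4 a b - f3 b c by rewrite -e2 (addrC (f3 b c)) addrK.
    rewrite e2' mulrBr mulrBl (kf4 gab) -mbc (kf3 gbc) -!mulrA k_e mulr1.
    by rewrite addrC subrK.
  + rewrite -!invM //.
    by rewrite -e3 scalerDr -mbc !scalerA (kf4 gbc).
- move=> x l; split; first by case: (C2 (E x) l).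
  case: (C2 x l) => _ e.
  by rewrite !Defs.qop_e grp_gone inv_e gmul_ee f3ee mulr1 sc1 -scalerA e.
- move=> x a b gab.
  have gE : E (gmul a b) = E a by rewrite grp_gmul.
  case: (C3 x gab) => _ e3 e4 e5.
  rewrite !qop_inv (qop_mul x gab).
  set y := qop x a.
  split.
  + by case: (C3 (E x) gab) => -> _ _ _; rewrite qopE.
  + have e0 : f3 (E a) (gmul a b) = f3 a b * f3 (E a) a.
      have g1 : grp (E a) = grp a by rewrite grp_gone.
      by case: (C0 g1 gab) => _ <- _ _ _; rewrite gmul1l.
    rewrite mulr1 gE e0 mulrA -(mulrA _ (f2 x _)) e3 mulrA (L1 y b) !mulrA.
    by [].
  + by rewrite gE -mulrA (L3 gab) -e4 -gab !mulrA.
  + rewrite -invM // scalerA -(mulrA _ (f3 _ _)) e_k mulr1 -scalerA -scalerDr e5.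
    by rewrite scalerDr scalerA (L1 y b) -scalerA.
- move=> x y z; case: (C4 x y z) => e1 e2 e3 e4.
  have l1 := L1 (qop x z) (qop y z); rewrite -qop_dist in l1.
  have ek := e_k (qop y z).
  rewrite !qop_inv -!qop_dist.
  split.
  + by case: (C4 (E x) y z) => e _ _ _; rewrite !qopE in e.
  + rewrite !mulrA -(L1 (qop x y) z) -(mulrA _ (f1 (qop x y) z)) e2 mulrA.
    by rewrite -(mulrA _ (f1 y z)) L4 !mulrA.
  + rewrite e3 mulrDr mulrDl !mulrA -l1.
    by rewrite -(mulrA _ (f3 (E (qop y z)) (qop y z))) ek mulr1.
  + rewrite !scalerA -(L1 (qop x y) z) -l1.
    rewrite -(mulrA _ (f3 (E (qop y z)) (qop y z))) ek mulr1 -!scalerA -!scalerDr e4.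
    by [].
- move=> a b x gab.
  have guv : grp (qop a x) = grp (qop b x) := qop_grp x gab.
  case: (C5 x gab) => e1 e2 e3 e4.
  have gE : E (gmul a b) = E a by rewrite grp_gmul.
  have l1 := L1 (gmul a b) x; rewrite (qop_hom x gab) in l1.
  rewrite !qop_inv (qop_hom x gab) -?invM //.
  split.
  + by rewrite mulr1 mul1r gE.
  + rewrite gE -gab.
    have g : grp (E a) = grp (ginv a) by rewrite grp_gone grp_ginv.
    by case: (C4 (E a) (ginv a) x) => e _ _ _; rewrite qop_einv qopE qop_inv in e.
  + by rewrite e3 mulrDr mulrDl !mulrA (kf3 guv) (kf4 guv) mul1r.
  + rewrite sc1 scalerA -l1 -scalerA -scalerDr e4.
    by rewrite !scalerDr !scalerA (kf3 guv) (kf4 guv).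
Qed.
End F.

Unset Implicit Arguments.
Theorem lemma4p2 (X : MCQ) (R : nzRingType) (M : lmodType R)
  (f1 f2 f3 f4 : X -> X -> R) (phi1 phi2 : X -> X -> M) :
  mcq_conditions f1 f2 f3 f4 phi1 phi2 ->
  mcq_conditions
    (fun x y => f1 (@gone X (@grp X x)) y)
    (fun x y => f3 (@qop X x y) (@qop X (@ginv X x) y) * f2 x y
                * f3 (@gone X (@grp X y)) y)
    (fun a b => 1)
    (fun a b => f1 (@gone X (@grp X a)) (@ginv X a))
    (fun x y => f3 (@qop X x y) (@qop X (@ginv X x) y) *: phi1 x y)
    (fun a b => f3 (@gmul X a b) (@gmul X (@ginv X b) (@ginv X a)) *: phi2 a b).
Proof. exact: main. Qed.
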